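(* Let $h>0$, $P\ge 0$, $0<\zeta\le 1$, $\sigma_A^2\ge 0$, $\sigma_{\rm cov}^2>0$, and let $N\ge 1$ be an integer. Define, for $\rho\in[0,1]$, $$f(\rho)=\log_2\!\left(1+\frac{(1-\rho)hP}{(1-\rho)\sigma_A^2+\sigma_{\rm cov}^2}\right).$$ Define the dynamic power splitting (DPS) region $$\mathcal{C}^{\rm DPS}(P)=\bigcup_{\boldsymbol\rho=(\rho_1,\dots,\rho_N)\in[0,1]^N}\Big\{(R,Q)\in\mathbb{R}^2:\ Q\le \tfrac1N\sum_{k=1}^N\rho_k\zeta hP,\ \ R\le \tfrac1N\sum_{k=1}^N f(\rho_k)\Big\}$$ and the static power splitting (SPS) region $$\mathcal{C}^{\rm SPS}(P)=\bigcup_{\rho\in[0,1]}\Big\{(R,Q)\in\mathbb{R}^2:\ Q\le \rho\zeta hP,\ \ R\le f(\rho)\Big\}.$$ Then $\mathcal{C}^{\rm DPS}(P)=\mathcal{C}^{\rm SPS}(P)$ for every $P\ge 0$.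
   Context: This models a separated information/energy receiver: in symbol $k$ of a block of $N$ symbols, a fraction $\rho_k$ of the received power $hP$ (channel gain $h$, transmit power $P$) is sent to an energy harvester with conversion efficiency $\zeta$, and the fraction $1-\rho_k$ to an information decoder whose rate is $f(\rho_k)$; $\sigma_A^2$ is antenna noise power and $\sigma_{\rm cov}^2$ is RF-to-baseband conversion noise power. SPS is the special case $\rho_k=\rho$ for all $k$. *)

(* Defs.v *)
From Stdlib Require Import Reals.
Open Scope R_scope.

Definition log2 (x : R) : R := ln x / ln 2.

Definition frate (h P sA2 scov2 rho : R) : R :=
  log2 (1 + ((1 - rho) * h * P) / ((1 - rho) * sA2 + scov2)).

Fixpoint sumN (n : nat) (g : nat -> R) : R :=
  match n with
  | O => 0
  | S m => sumN m g + g m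
  end.

(* DPS region: rho is a vector (rho_0,...,rho_{N-1}) with entries in [0,1]
   (only the first N entries of the function matter). *)
Definition C_DPS (N : nat) (h P zeta sA2 scov2 : R) (RQ : R * R) : Prop :=
  exists rho : nat -> R,
    (forall k, (k < N)%nat -> 0 <= rho k <= 1) /\
    snd RQ <= / INR N * sumN N (fun k => rho k * zeta * h * P) /\
    fst RQ <= / INR N * sumN N (fun k => frate h P sA2 scov2 (rho k)).

Definition C_SPS (h P zeta sA2 scov2 : R) (RQ : R * R) : Prop :=
  exists rho : R,
    0 <= rho <= 1 /\
    snd RQ <= rho * zeta * h * P /\
    fst RQ <= frate h P sA2 scov2 rho.

(* Main.v *)
Require Import Defs.
From Stdlib Require Import Reals Lra Lia FunctionalExtensionality.
Open Scope R_scope.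

Lemma ln_le_m1 u : 0 < u -> ln u <= u - 1.
Proof. intro H. pose proof (exp_ineq1_le (ln u)). rewrite exp_ln in H0; lra. Qed.

Lemma Rdiv_le_0_compat x y : 0 <= x -> 0 < y -> 0 <= x / y.
Proof. intros. unfold Rdiv. apply Rmult_le_pos; [lra| left; apply Rinv_0_lt_compat; lra]. Qed.

Lemma tangent (a b c mu : R) : 0 <= a -> 0 <= b -> 0 < c -> 0 <= mu <= 1 ->
  exists K, forall rho, 0 <= rho <= 1 ->
   ln (1 + ((1 - rho) * a) / ((1 - rho) * b + c)) <=
   ln (1 + ((1 - mu) * a) / ((1 - mu) * b + c)) + K * (rho - mu).
Proof.
  intros Ha Hb Hc Hmu.
  set (Bm := (1 - mu) * b + c).
  assert (HBm : 0 < Bm) by (unfold Bm; nra).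
  set (rm := 1 + ((1 - mu) * a) / Bm).
  assert (Hrm : 0 < rm).
  { unfold rm. assert (0 <= (1 - mu) * a / Bm). apply Rdiv_le_0_compat; [apply Rmult_le_pos; lra | lra]. lra. }
  exists (- (a * c) / (Bm * Bm * rm)).
  intros rho Hrho.
  set (Br := (1 - rho) * b + c).
  assert (HBr : 0 < Br) by (unfold Br; nra).
  set (rr := 1 + ((1 - rho) * a) / Br).
  assert (Hrr : 0 < rr).
  { unfold rr. assert (0 <= (1 - rho) * a / Br). apply Rdiv_le_0_compat; [apply Rmult_le_pos; lra | lra]. lra. }
  fold Bm rm Br rr.
  assert (E : rr = (rr / rm) * rm) by (field; lra).
  rewrite E, ln_mult; [| apply Rdiv_lt_0_compat; lra | lra].
  pose proof (ln_le_m1 (rr / rm) ltac:(apply Rdiv_lt_0_compat; lra)).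
  assert (D : rr - rm = a * c * (mu - rho) / (Bm * Bm)
                - a * b * c * (mu - rho) * (mu - rho) / (Br * Bm * Bm)).
  { unfold rr, rm, Br, Bm. unfold Br, Bm in HBr, HBm. field. lra. }
  assert (P : 0 <= a * b * c * (mu - rho) * (mu - rho) / (Br * Bm * Bm)).
  { apply Rdiv_le_0_compat. 2: (apply Rmult_lt_0_compat; [apply Rmult_lt_0_compat|]; lra).
    assert (0 <= a * b * c) by (apply Rmult_le_pos; [apply Rmult_le_pos|]; lra).
    assert (0 <= (mu - rho) * (mu - rho)) by apply Rle_0_sqr. replace (a * b * c * (mu - rho) * (mu - rho)) with ((a*b*c) * ((mu - rho) * (mu - rho))) by ring. apply Rmult_le_pos; lra. }
  assert (rr / rm - 1 <= - (a * c) / (Bm * Bm * rm) * (rho - mu)).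
  { assert (X1 : rr / rm - 1 = (rr - rm) / rm) by (field; lra).
    assert (X2 : - (a * c) / (Bm * Bm * rm) * (rho - mu) = (a * c * (mu - rho) / (Bm * Bm)) / rm)
      by (field; lra).
    rewrite X1, X2. unfold Rdiv at 1 3. apply Rmult_le_compat_r.
    left; apply Rinv_0_lt_compat; lra. lra. }
  lra.
Qed.

Lemma sumN_le n f g : (forall k, (k < n)%nat -> f k <= g k) -> sumN n f <= sumN n g.
Proof.
  induction n; cbn [sumN]; intros H. simpl; lra.
  assert (sumN n f <= sumN n g) by (apply IHn; intros; apply H; lia).
  pose proof (H n ltac:(lia)). lra.
Qed.

Lemma sumN_affine n f c d : sumN n (fun k => c + d * f k) = INR n * c + d * sumN n f.
Proof. induction n; cbn [sumN]. simpl; ring. rewrite IHn, S_INR. ring. Qed.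

Lemma sumN_mulr n f d : sumN n (fun k => f k * d) = sumN n f * d.
Proof. induction n; cbn [sumN]. simpl; ring. rewrite IHn. ring. Qed.

Lemma sumN_const n c : sumN n (fun _ => c) = INR n * c.
Proof. induction n; cbn [sumN]. simpl; ring. rewrite IHn, S_INR. ring. Qed.

Lemma sumN_bounds n f : (forall k, (k < n)%nat -> 0 <= f k <= 1) ->
  0 <= sumN n f <= INR n.
Proof.
  induction n; cbn [sumN]; intros H. simpl; lra.
  assert (0 <= sumN n f <= INR n) by (apply IHn; intros; apply H; lia).
  pose proof (H n ltac:(lia)). rewrite S_INR. lra.
Qed.

Theorem proposition1 (h zeta sA2 scov2 : R) (N : nat)
  (hh : 0 < h) (hz : 0 < zeta <= 1) (hA : 0 <= sA2) (hc : 0 < scov2)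
  (hN : (1 <= N)%nat) :
  forall P : R, 0 <= P ->
  forall RQ : R * R, C_DPS N h P zeta sA2 scov2 RQ <-> C_SPS h P zeta sA2 scov2 RQ.
Proof.
  intros P HP RQ.
  assert (HNpos : 0 < INR N) by (apply lt_0_INR; lia).
  assert (Hl2 : 0 < ln 2) by (pose proof ln_lt_2; lra).
  unfold C_DPS, C_SPS. split.
  - intros [rho [Hr [HQ HR]]].
    set (mu := / INR N * sumN N rho).
    pose proof (sumN_bounds N rho Hr) as Hb.
    assert (Hmu : 0 <= mu <= 1).
    { unfold mu. split. apply Rmult_le_pos; [left; apply Rinv_0_lt_compat|]; lra.
      apply (Rmult_le_reg_l (INR N)); auto. rewrite <- Rmult_assoc, Rinv_r; lra. }
    exists mu. split; [exact Hmu|]. split.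
    + revert HQ. unfold mu.
      replace (sumN N (fun k => rho k * zeta * h * P)) with (sumN N rho * (zeta * h * P)).
      intro; lra.
      rewrite <- sumN_mulr. f_equal. apply functional_extensionality. intro; ring.
    + destruct (tangent (h * P) sA2 scov2 mu ltac:(nra) hA hc Hmu) as [K HK].
      assert (Hf : forall r, 0 <= r <= 1 -> frate h P sA2 scov2 r <=
                 (frate h P sA2 scov2 mu - K / ln 2 * mu) + K / ln 2 * r).
      { intros r Hr0. unfold frate, log2.
        replace ((1 - r) * h * P) with ((1 - r) * (h * P)) by ring.
        replace ((1 - mu) * h * P) with ((1 - mu) * (h * P)) by ring.
        pose proof (HK r Hr0).
        assert (forall x y, x <= y -> x / ln 2 <= y / ln 2).
        { intros. unfold Rdiv. apply Rmult_le_compat_r; [left; apply Rinv_0_lt_compat|]; lra. }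
        apply H0 in H.
        replace ((ln (1 + (1 - mu) * (h * P) / ((1 - mu) * sA2 + scov2)) + K * (r - mu)) / ln 2)
          with (ln (1 + (1 - mu) * (h * P) / ((1 - mu) * sA2 + scov2)) / ln 2
                 - K / ln 2 * mu + K / ln 2 * r) in H by (field; lra).
        exact H. }
      assert (S1 := sumN_le N _ _ (fun k Hk => Hf (rho k) (Hr k Hk))).
      rewrite sumN_affine in S1.
      assert (Emu : sumN N rho = INR N * mu).
      { unfold mu. field. lra. }
      rewrite Emu in S1.
      assert (/ INR N * sumN N (fun k => frate h P sA2 scov2 (rho k)) <= frate h P sA2 scov2 mu).
      { apply (Rmult_le_reg_l (INR N)); auto. rewrite <- Rmult_assoc, Rinv_r by lra.
        lra. }
      lra.
  - intros [r [Hr [HQ HR]]].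
    exists (fun _ => r). split; [intros; exact Hr|].
    rewrite !sumN_const. split.
    + replace (/ INR N * (INR N * (r * zeta * h * P))) with (r * zeta * h * P) by (field; lra). exact HQ.
    + replace (/ INR N * (INR N * frate h P sA2 scov2 r)) with (frate h P sA2 scov2 r) by (field; lra). exact HR.
Qed.
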